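(* Fix an edge $(i,t)\in E$, a partial sample path $\omega_{t-1}$, and seed values $Y_{-i}=(y_j)_{j\ne i}$. Let $I^t_{-i}$ be the set of neighbours $j\neq i$ of $t$ that are still available when $t$ arrives in the execution of Algorithm 1 on the instance with $i$ removed (same $Y_{-i}$, outcomes of earlier edges given by $\omega_{t-1}$). Define $y^c_i\in[0,1]$ by $p_{it}r_i(1-g(y^c_i))=\max_{j\in I^t_{-i}}p_{jt}r_j(1-g(y_j))$, with $y^c_i=1$ if $I^t_{-i}=\emptyset$ and $y^c_i=0$ if no such value exists. Then for every $y_i\in[0,1]$, $E[\lambda^Y_t\mid\omega_{t-1}]\ge p_{it}r_i(1-g(y^c_i))$; consequently $E_{y_i\sim U[0,1]}\big[E[\lambda^Y_t\mid\omega_{t-1}]\big]\ge p_{it}r_i(1-g(y^c_i))$.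
   Context: Online stochastic rewards problem: bipartite graph $G=(I,T,E)$, resources $i\in I$ with rewards $r_i>0$ and unit capacity, arrivals $t=1,2,\dots$ with edge probabilities $p_{it}\in[0,1]$; each arrival is offered at most one available neighbour, the offer succeeds independently with probability $p_{it}$, earning $r_i$ and making $i$ unavailable; otherwise $i$ stays available. A sample path $\omega$ fixes for every edge an outcome $\mathbb{1}^\omega(i,t)\in\{0,1\}$ (independent Bernoulli($p_{it}$)); an offer of $i$ to $t$ on $\omega$ succeeds iff $\mathbb{1}^\omega(i,t)=1$. $\omega_{t-1}$ is the restriction of $\omega$ to edges incident to arrivals $t'\le t-1$; $E[\cdot\mid\omega_{t-1}]$ averages over the outcomes of all remaining edges. Algorithm 1: $g(y)=e^{y-1}$; seed $Y=(y_i)_{i\in I}$ with $y_i$ i.i.d. $U[0,1]$; arrival $t$ is offered the available neighbour $i$ maximizing $p_{it}r_i(1-g(y_i))$. Dual variables: all initialized to $0$; whenever Algorithm 1 on $(\omega,Y)$ offers $i$ to $t$, set $\lambda^{Y}_t=r_i(1-g(y_i))\mathbb{1}^\omega(i,t)$ and increase $\theta^{Y}_i$ by $r_ig(y_i)\mathbb{1}^\omega(i,t)$ (dependence on $\omega$ suppressed). *)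

(* Defs.v *)
From Stdlib Require Import Reals Lra Arith.
Open Scope R_scope.

(* Conventions:
   - resources are 0..n-1 (nat); arrivals are indexed 0,1,2,... (nat);
   - adj j s : bool  says (j,s) is an edge of E;
   - p j s = p_{js}, r j = r_j;
   - a sample path is w : nat -> nat -> bool, w j s = outcome of edge (j,s);
   - a seed is y : nat -> R (y j = y_j). *)

Definition g (x : R) : R := exp (x - 1).

Definition score (p : nat -> nat -> R) (r : nat -> R) (y : nat -> R)
  (j s : nat) : R := p j s * r j * (1 - g (y j)).

(* Algorithm 1's choice at arrival s, given the current availability [av]:
   among the candidates j < n that are present, available and adjacent to s,
   an index maximising the score (ties broken in favour of the smallest
   index); None if there is no candidate. *)
Fixpoint choose_upto (k : nat) (cand : nat -> bool) (sc : nat -> R) : option nat :=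
  match k with
  | O => None
  | S k' =>
      let b := choose_upto k' cand sc in
      if cand k' then
        match b with
        | None => Some k'
        | Some j => if Rlt_dec (sc j) (sc k') then Some k' else Some j
        end
      else b
  end.

Definition choose (n : nat) (adj : nat -> nat -> bool) (p : nat -> nat -> R)
  (r : nat -> R) (y : nat -> R) (av : nat -> bool) (s : nat) : option nat :=
  choose_upto n (fun j => andb (av j) (adj j s)) (fun j => score p r y j s).

(* Availability of resources just before arrival s, on the instance whose
   resource set is {j | present j} (present = all for the full instance,
   present j = (j != i) for the instance with i removed). *)
Fixpoint avail (n : nat) (adj : nat -> nat -> bool) (p : nat -> nat -> R)
  (r : nat -> R) (present : nat -> bool) (w : nat -> nat -> bool)
  (y : nat -> R) (s : nat) : nat -> bool :=
  match s with
  | O => present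
  | S s' =>
      let av := avail n adj p r present w y s' in
      match choose n adj p r y av s' with
      | Some j => if w j s' then (fun k => if Nat.eqb k j then false else av k) else av
      | None => av
      end
  end.

Definition lambda (n : nat) (adj : nat -> nat -> bool) (p : nat -> nat -> R)
  (r : nat -> R) (w : nat -> nat -> bool) (y : nat -> R) (t : nat) : R :=
  match choose n adj p r y (avail n adj p r (fun _ => true) w y t) t with
  | Some j => r j * (1 - g (y j)) * (if w j t then 1 else 0)
  | None => 0
  end.

Definition upd (b : nat -> bool) (k : nat) (v : bool) : nat -> bool :=
  fun j => if Nat.eqb j k then v else b j.

(* Expectation of f(b) where b 0, ..., b (k-1) are independent Bernoulli(q j)
   (other coordinates fixed to false). *)
Fixpoint bexp (q : nat -> R) (k : nat) (f : (nat -> bool) -> R) : R :=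
  match k with
  | O => f (fun _ => false)
  | S k' => q k' * bexp q k' (fun b => f (upd b k' true))
            + (1 - q k') * bexp q k' (fun b => f (upd b k' false))
  end.

(* The sample path equal to w on arrivals < t, to b on arrival t
   (b j = outcome of edge (j,t)), and (arbitrarily) false afterwards. *)
Definition merge (w : nat -> nat -> bool) (t : nat) (b : nat -> bool) :
  nat -> nat -> bool :=
  fun j s => if Nat.ltb s t then w j s else if Nat.eqb s t then b j else false.

(* E[lambda_t^Y | omega_{t-1}]: average over the outcomes of the edges of
   arrival t (lambda_t does not depend on the edges of later arrivals). *)
Definition cond_exp_lambda (n : nat) (adj : nat -> nat -> bool)
  (p : nat -> nat -> R) (r : nat -> R) (w : nat -> nat -> bool)
  (y : nat -> R) (t : nat) : R :=
  bexp (fun j => p j t) n (fun b => lambda n adj p r (merge w t b) y t).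

Definition set_seed (y : nat -> R) (i : nat) (yi : R) : nat -> R :=
  fun j => if Nat.eqb j i then yi else y j.

Definition in_I_minus (n : nat) (adj : nat -> nat -> bool) (p : nat -> nat -> R)
  (r : nat -> R) (w : nat -> nat -> bool) (y : nat -> R) (i t j : nat) : Prop :=
  (j < n)%nat /\ j <> i /\ adj j t = true /\
  avail n adj p r (fun k => negb (Nat.eqb k i)) w y t j = true.

(* Main.v *)
Require Import Defs.
From Stdlib Require Import Reals.
From Stdlib Require Import Lra Lia Arith Classical.
Open Scope R_scope.

Lemma exp_le' x y : x <= y -> exp x <= exp y.
Proof. intros H. destruct (Rle_lt_or_eq_dec _ _ H) as [h|h].
  - left; apply exp_increasing; auto.
  - subst; right; reflexivity. Qed.

Lemma ln_le' x y : 0 < x -> x <= y -> ln x <= ln y.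
Proof. intros H0 H. destruct (Rle_lt_or_eq_dec _ _ H) as [h|h].
  - left; apply ln_increasing; auto.
  - subst; right; reflexivity. Qed.

Lemma cu_none k cand sc : choose_upto k cand sc = None ->
  forall j, (j < k)%nat -> cand j = false.
Proof.
  induction k; simpl; intros H j Hj; [lia|].
  destruct (cand k) eqn:Hc.
  - destruct (choose_upto k cand sc); [destruct (Rlt_dec _ _)|]; discriminate.
  - destruct (Nat.eq_dec j k) as [->|hne]; auto.
    apply IHk; auto; lia.
Qed.

Lemma cu_some k cand sc x : choose_upto k cand sc = Some x ->
  (x < k)%nat /\ cand x = true /\
  (forall j, (j < k)%nat -> cand j = true -> sc j <= sc x) /\
  (forall j, (j < x)%nat -> cand j = true -> sc j < sc x).
Proof.
  revert x; induction k; simpl; intros x H; [discriminate|].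
  destruct (cand k) eqn:Hc.
  - destruct (choose_upto k cand sc) as [j|] eqn:E.
    + destruct (IHk j eq_refl) as [h1 [h2 [h3 h4]]].
      destruct (Rlt_dec (sc j) (sc k)) as [Hlt|Hge]; inversion H; subst x.
      * repeat split; auto.
        -- intros j' Hj' Hc'. destruct (Nat.eq_dec j' k) as [->|hne]; [lra|].
           specialize (h3 j' ltac:(lia) Hc'). lra.
        -- intros j' Hj' Hc'. specialize (h3 j' ltac:(lia) Hc'). lra.
      * repeat split; auto.
        intros j' Hj' Hc'. destruct (Nat.eq_dec j' k) as [->|hne]; [lra|].
        apply h3; auto; lia.
    + inversion H; subst x. repeat split; auto.
      * intros j' Hj' Hc'. destruct (Nat.eq_dec j' k) as [->|hne]; [lra|].
        rewrite (cu_none _ _ _ E j' ltac:(lia)) in Hc'. discriminate.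
      * intros j' Hj' Hc'.
        rewrite (cu_none _ _ _ E j' ltac:(lia)) in Hc'. discriminate.
  - destruct (IHk x H) as [h1 [h2 [h3 h4]]]. repeat split; auto.
    intros j' Hj' Hc'. destruct (Nat.eq_dec j' k) as [->|hne].
    + rewrite Hc in Hc'; discriminate.
    + apply h3; auto; lia.
Qed.

Lemma cu_unique k cand sc x : (x < k)%nat -> cand x = true ->
  (forall j, (j < k)%nat -> cand j = true -> sc j <= sc x) ->
  (forall j, (j < x)%nat -> cand j = true -> sc j < sc x) ->
  choose_upto k cand sc = Some x.
Proof.
  intros h1 h2 h3 h4.
  destruct (choose_upto k cand sc) as [z|] eqn:E.
  - destruct (cu_some _ _ _ _ E) as [g1 [g2 [g3 g4]]].
    destruct (Nat.lt_trichotomy z x) as [h|[h|h]].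
    + specialize (h4 z h g2). specialize (g3 x h1 h2). lra.
    + subst; reflexivity.
    + specialize (g4 x h h2). specialize (h3 z g1 g2). lra.
  - rewrite (cu_none _ _ _ E x h1) in h2. discriminate.
Qed.

Lemma cu_sub k c1 c2 s1 s2 x :
  (forall j, c1 j = true -> c2 j = true) ->
  (forall j, c1 j = true -> s1 j = s2 j) ->
  choose_upto k c2 s2 = Some x -> c1 x = true ->
  choose_upto k c1 s1 = Some x.
Proof.
  intros Hc Hs H Hx. destruct (cu_some _ _ _ _ H) as [g1 [g2 [g3 g4]]].
  apply cu_unique; auto.
  - intros j Hj Hcj. rewrite (Hs j Hcj), (Hs x Hx). apply g3; auto.
  - intros j Hj Hcj. rewrite (Hs j Hcj), (Hs x Hx). apply g4; auto.
Qed.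

Lemma avail_mono n adj p r pres w y s k :
  avail n adj p r pres w y s k = true -> pres k = true.
Proof.
  revert k; induction s; simpl; intros k H; auto.
  destruct (choose n adj p r y (avail n adj p r pres w y s) s) as [j|];
    [destruct (w j s)|]; auto.
  destruct (k =? j); [discriminate|auto].
Qed.

Lemma avail_ext n adj p r pres w1 w2 y s :
  (forall j s', (s' < s)%nat -> w1 j s' = w2 j s') ->
  avail n adj p r pres w1 y s = avail n adj p r pres w2 y s.
Proof.
  induction s; simpl; intros H; auto.
  rewrite IHs by (intros; apply H; lia).
  destruct (choose _ _ _ _ _ _ _) as [j|]; auto.
  rewrite (H j s) by lia. reflexivity.
Qed.

Lemma avail_inv n adj p r w y y' i
  (hyy : forall j, j <> i -> y' j = y j) s k :
  avail n adj p r (fun k => negb (k =? i)) w y s k = true ->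
  avail n adj p r (fun _ => true) w y' s k = true.
Proof.
  revert k; induction s; simpl; intros k H; auto.
  set (a1 := avail n adj p r (fun k => negb (k =? i)) w y s) in *.
  set (a2 := avail n adj p r (fun _ => true) w y' s) in *.
  assert (Hs : forall j, (a1 j && adj j s)%bool = true ->
             score p r y j s = score p r y' j s).
  { intros j Hj. apply andb_prop in Hj. destruct Hj as [Hj _].
    apply avail_mono in Hj. apply Bool.negb_true_iff, Nat.eqb_neq in Hj.
    unfold score. rewrite hyy; auto. }
  assert (Hsub : forall j, (a1 j && adj j s)%bool = true ->
             (a2 j && adj j s)%bool = true).
  { intros j Hj. apply andb_prop in Hj. destruct Hj as [Hj Ha].
    rewrite (IHs j Hj), Ha; reflexivity. }
  assert (H1 : a1 k = true).
  { destruct (choose n adj p r y a1 s) as [z|]; [destruct (w z s)|]; auto.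
    destruct (k =? z); [discriminate|auto]. }
  destruct (choose n adj p r y' a2 s) as [x|] eqn:E2; [|auto].
  destruct (w x s) eqn:Wx; [|auto].
  destruct (k =? x) eqn:Kx; [|auto].
  apply Nat.eqb_eq in Kx; subst k. exfalso.
  destruct (cu_some _ _ _ _ E2) as [g1 [g2 _]].
  assert (Hc1 : (a1 x && adj x s)%bool = true).
  { apply andb_prop in g2. destruct g2 as [_ Ha]. rewrite H1, Ha; reflexivity. }
  assert (E1 : choose n adj p r y a1 s = Some x).
  { unfold choose. eapply cu_sub; [exact Hsub| |exact E2|exact Hc1].
    intros j Hj. apply Hs; auto. }
  rewrite E1, Wx, Nat.eqb_refl in H. discriminate.
Qed.

Lemma bexp_ext q k f1 f2 : (forall b, f1 b = f2 b) -> bexp q k f1 = bexp q k f2.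
Proof.
  revert f1 f2; induction k; simpl; intros f1 f2 H; auto.
  rewrite (IHk (fun b => f1 (upd b k true)) (fun b => f2 (upd b k true))) by (intros; apply H).
  rewrite (IHk (fun b => f1 (upd b k false)) (fun b => f2 (upd b k false))) by (intros; apply H).
  reflexivity.
Qed.

Lemma bexp_const q k c : bexp q k (fun _ => c) = c.
Proof. induction k; simpl; auto. rewrite IHk. ring. Qed.

Lemma bexp_bit_out q k x (F : bool -> R) : (k <= x)%nat ->
  bexp q k (fun b => F (b x)) = F false.
Proof.
  revert F; induction k; simpl; intros F Hx; auto.
  assert (Hne : (x =? k) = false) by (apply Nat.eqb_neq; lia).
  rewrite (bexp_ext _ _ _ (fun b => F (b x))).
  2:{ intros b; unfold upd; rewrite Hne; reflexivity. }
  rewrite (bexp_ext _ _ (fun b => F (upd b k false x)) (fun b => F (b x))).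
  2:{ intros b; unfold upd; rewrite Hne; reflexivity. }
  rewrite IHk by lia. ring.
Qed.

Lemma bexp_bit q k x (F : bool -> R) : (x < k)%nat ->
  bexp q k (fun b => F (b x)) = q x * F true + (1 - q x) * F false.
Proof.
  revert F; induction k; simpl; intros F Hx; [lia|].
  destruct (Nat.eq_dec x k) as [->|hne].
  - rewrite (bexp_ext _ _ _ (fun _ => F true)).
    2:{ intros b; unfold upd; rewrite Nat.eqb_refl; reflexivity. }
    rewrite (bexp_ext _ _ (fun b => F (upd b k false k)) (fun _ => F false)).
    2:{ intros b; unfold upd; rewrite Nat.eqb_refl; reflexivity. }
    rewrite !bexp_const. reflexivity.
  - assert (Hne : (x =? k) = false) by (apply Nat.eqb_neq; lia).
    rewrite (bexp_ext _ _ _ (fun b => F (b x))).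
    2:{ intros b; unfold upd; rewrite Hne; reflexivity. }
    rewrite (bexp_ext _ _ (fun b => F (upd b k false x)) (fun b => F (b x))).
    2:{ intros b; unfold upd; rewrite Hne; reflexivity. }
    rewrite IHk by lia. ring.
Qed.

Lemma cond_eq n adj p r w y t :
  cond_exp_lambda n adj p r w y t =
  match choose n adj p r y (avail n adj p r (fun _ => true) w y t) t with
  | Some x => score p r y x t
  | None => 0 end.
Proof.
  unfold cond_exp_lambda, lambda.
  rewrite (bexp_ext _ _ _ (fun b =>
     match choose n adj p r y (avail n adj p r (fun _ => true) w y t) t with
     | Some j => r j * (1 - g (y j)) * (if b j then 1 else 0)
     | None => 0 end)).
  2:{ intros b. rewrite (avail_ext _ _ _ _ _ (merge w t b) w).
      2:{ intros j s' hs. unfold merge. apply Nat.ltb_lt in hs. rewrite hs; reflexivity. }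
      destruct (choose _ _ _ _ _ _ _); auto.
      unfold merge. rewrite Nat.ltb_irrefl, Nat.eqb_refl. reflexivity. }
  destruct (choose n adj p r y (avail n adj p r (fun _ => true) w y t) t) as [x|] eqn:E.
  - destruct (cu_some _ _ _ _ E) as [g1 _].
    change (bexp (fun j => p j t) n
      (fun b => (fun bb : bool => r x * (1 - g (y x)) * (if bb then 1 else 0)) (b x))
      = score p r y x t).
    rewrite bexp_bit by exact g1. unfold score. ring.
  - apply bexp_const.
Qed.

Lemma score_nonneg p r y j t : (forall j s, 0 <= p j s <= 1) -> (forall j, 0 < r j) ->
  0 <= y j <= 1 -> 0 <= score p r y j t.
Proof.
  intros hp hr hy. unfold score, g.
  assert (exp (y j - 1) <= 1) by (rewrite <- exp_0 at 2; apply exp_le'; lra).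
  specialize (hp j t). specialize (hr j).
  apply Rmult_le_pos; [apply Rmult_le_pos|]; lra.
Qed.

Theorem lemma3
  (n : nat) (adj : nat -> nat -> bool) (p : nat -> nat -> R) (r : nat -> R)
  (hp : forall j s, 0 <= p j s <= 1) (hr : forall j, 0 < r j)
  (i t : nat) (hi : (i < n)%nat) (hedge : adj i t = true)
  (w : nat -> nat -> bool)            (* only w j s with s < t matter: omega_{t-1} *)
  (y : nat -> R) (hy : forall j, j <> i -> 0 <= y j <= 1)   (* Y_{-i} *)
  (yc : R)
  (hyc_empty : (forall j, ~ in_I_minus n adj p r w y i t j) -> yc = 1)
  (hyc_sol : forall M,
      (exists j, in_I_minus n adj p r w y i t j /\ M = score p r y j t) ->
      (forall j, in_I_minus n adj p r w y i t j -> score p r y j t <= M) ->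
      (exists z, 0 <= z <= 1 /\ p i t * r i * (1 - g z) = M) ->
      0 <= yc <= 1 /\ p i t * r i * (1 - g yc) = M)
  (hyc_none : forall M,
      (exists j, in_I_minus n adj p r w y i t j /\ M = score p r y j t) ->
      (forall j, in_I_minus n adj p r w y i t j -> score p r y j t <= M) ->
      ~ (exists z, 0 <= z <= 1 /\ p i t * r i * (1 - g z) = M) ->
      yc = 0) :
  (forall yi, 0 <= yi <= 1 ->
     cond_exp_lambda n adj p r w (set_seed y i yi) t >= p i t * r i * (1 - g yc))
  /\
  (forall pr : Riemann_integrable
                 (fun yi => cond_exp_lambda n adj p r w (set_seed y i yi) t) 0 1,
     RiemannInt pr >= p i t * r i * (1 - g yc)).
Proof.
  assert (P1 : forall yi, 0 <= yi <= 1 ->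
     cond_exp_lambda n adj p r w (set_seed y i yi) t >= p i t * r i * (1 - g yc)).
  { intros yi Hyi.
    set (y' := set_seed y i yi).
    assert (hyy : forall j, j <> i -> y' j = y j).
    { intros j hj. unfold y', set_seed. apply Nat.eqb_neq in hj. rewrite hj; reflexivity. }
    assert (Hy' : forall j, 0 <= y' j <= 1).
    { intros j. destruct (Nat.eq_dec j i) as [->|hj].
      - unfold y', set_seed. rewrite Nat.eqb_refl. exact Hyi.
      - rewrite hyy; auto. }
    rewrite cond_eq.
    set (a1 := avail n adj p r (fun k => negb (k =? i)) w y t).
    set (a2 := avail n adj p r (fun _ => true) w y' t).
    destruct (choose n adj p r y a1 t) as [j0|] eqn:E1.
    - destruct (cu_some _ _ _ _ E1) as [g1 [g2 [g3 _]]].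
      apply andb_prop in g2. destruct g2 as [Ha1 Hadj].
      assert (Hj0i : j0 <> i).
      { pose proof (avail_mono _ _ _ _ _ _ _ _ _ Ha1) as h.
        apply Bool.negb_true_iff, Nat.eqb_neq in h. exact h. }
      assert (HI : in_I_minus n adj p r w y i t j0) by (repeat split; auto).
      set (M := score p r y j0 t).
      assert (Hmax : forall j, in_I_minus n adj p r w y i t j -> score p r y j t <= M).
      { intros j [h1 [h2 [h3 h4]]]. apply g3; auto.
        change ((a1 j && adj j t)%bool = true). unfold a1; rewrite h4, h3; reflexivity. }
      assert (HM0 : 0 <= M) by (apply score_nonneg; auto).
      assert (Ha2 : a2 j0 = true) by (apply (avail_inv _ _ _ _ _ y y' i hyy); auto).
      assert (Hge : match choose n adj p r y' a2 t with
                    | Some x => score p r y' x t | None => 0 end >= M).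
      { destruct (choose n adj p r y' a2 t) as [x|] eqn:E2.
        - destruct (cu_some _ _ _ _ E2) as [_ [_ [h3 _]]].
          assert (h := h3 j0 g1 ltac:(rewrite Ha2, Hadj; reflexivity)).
          unfold M. unfold score in h |- *. rewrite hyy in h by auto. lra.
        - exfalso. pose proof (cu_none _ _ _ E2 j0 g1) as h.
          change ((a2 j0 && adj j0 t)%bool = false) in h.
          rewrite Ha2, Hadj in h. discriminate. }
      assert (Hex : exists j, in_I_minus n adj p r w y i t j /\ M = score p r y j t)
        by (exists j0; split; auto).
      destruct (classic (exists z, 0 <= z <= 1 /\ p i t * r i * (1 - g z) = M)) as [Hz|Hz].
      + destruct (hyc_sol M Hex Hmax Hz) as [_ ->]. exact Hge.
      + rewrite (hyc_none M Hex Hmax Hz).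
        apply Rge_trans with M; [exact Hge|].
        apply Rnot_lt_ge. intro Hlt. apply Hz.
        set (pr := p i t * r i) in *.
        assert (He1 : 0 < exp (-1)) by apply exp_pos.
        assert (He2 : exp (-1) < 1) by (apply Rlt_le_trans with (exp 0); [apply exp_increasing; lra | rewrite exp_0; lra]).
        assert (Hg0 : g 0 = exp (-1)) by (unfold g; f_equal; ring).
        rewrite Hg0 in Hlt.
        assert (Hpr0 : 0 <= pr).
        { unfold pr. specialize (hp i t). specialize (hr i). apply Rmult_le_pos; lra. }
        assert (Hpr : 0 < pr).
        { destruct (Rle_lt_or_eq_dec _ _ Hpr0) as [h|h]; auto.
          rewrite <- h in Hlt. lra. }
        set (q := M / pr).
        assert (HqM : M = q * pr) by (unfold q; field; lra).
        assert (Hq0 : 0 <= q) by nra.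
        assert (Hq1 : q < 1 - exp (-1)) by nra.
        set (u := 1 - q).
        assert (Hu : 0 < u) by (unfold u; lra).
        exists (1 + ln u). split.
        * assert (ln u <= ln 1) by (apply ln_le'; unfold u; lra).
          assert (ln (exp (-1)) <= ln u) by (apply ln_le'; unfold u; lra).
          rewrite ln_1 in *. rewrite ln_exp in *. lra.
        * unfold g. replace (1 + ln u - 1) with (ln u) by ring.
          rewrite exp_ln by exact Hu. unfold u. rewrite HqM. ring.
    - assert (Hyc : yc = 1).
      { apply hyc_empty. intros j [h1 [h2 [h3 h4]]].
        pose proof (cu_none _ _ _ E1 j h1) as h.
        change ((a1 j && adj j t)%bool = false) in h.
        unfold a1 in h. rewrite h4, h3 in h. discriminate. }
      rewrite Hyc. unfold g. replace (1 - 1) with 0 by ring. rewrite exp_0.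
      replace (p i t * r i * (1 - 1)) with 0 by ring.
      destruct (choose n adj p r y' a2 t) as [x|]; [|lra].
      apply Rle_ge, score_nonneg; auto. }
  split; [exact P1|].
  intros pr.
  set (c := p i t * r i * (1 - g yc)).
  pose proof (RiemannInt_P15 (RiemannInt_P14 0 1 c)) as Hc.
  apply Rle_ge.
  replace c with (RiemannInt (RiemannInt_P14 0 1 c)) by (rewrite Hc; ring).
  apply RiemannInt_P19; [lra|].
  intros x Hx. unfold fct_cte. apply Rge_le. apply P1. lra.
Qed.
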